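(* Let $d,\ell,m$ be positive integers with $m\ge\ell$. Let $H=(V,E)$ be an almost-acyclic $k$-uniform hypergraph with $m$ edges in which every edge is incident to at most $d$ other edges. Then $$\sum_{E'\subseteq E}|\mathcal B_\ell(E')|\le\Big(\frac{(15dN^k)^4m}{\ell}\Big)^{\ell/2}.$$
   Context: $N\ge2$, $\mathbb Z_N=\mathbb Z/N\mathbb Z$. A $k$-uniform hypergraph $(V,E)$ has finite vertex set $V$ and a set $E$ of edges, each an ordered $k$-tuple of distinct vertices; two edges are incident if they share a vertex. It is almost-acyclic if for every $\ell'\ge0$, any $\ell'$ distinct edges together cover at least $\ell'(k-1.1)$ vertices. For $y\in\mathbb Z_N^V$, $\|y\|_{\mathsf H}$ is the number of nonzero coordinates. For $E'\subseteq E$, $\mathcal B(E')$ is the set of maps $B:E'\to\mathbb Z_N^V$ such that for each $e=(v_1,\dots,v_k)\in E'$, $\mathrm{supp}(B(e))\subseteq\{v_1,\dots,v_k\}$ and $|\mathrm{supp}(B(e))|\ge3$; $\Sigma B=\sum_{e\in E'}B(e)$; and $\mathcal B_\ell(E')=\{B\in\mathcal B(E'):\|\Sigma B\|_{\mathsf H}=\ell\}$. *)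

(* Defs.v *)
From Stdlib Require Import Reals.
From mathcomp Require Import all_boot all_algebra.
Set Implicit Arguments. Unset Strict Implicit. Unset Printing Implicit Defensive.
Import GRing.Theory.

(* Vertices: a finite type V.  Edges of a k-uniform hypergraph: ordered
   k-tuples of vertices (distinctness imposed as a hypothesis: uniq e). *)

Definition incident (V : finType) (k : nat) (e f : k.-tuple V) : bool :=
  has (fun v => v \in f) e.

Definition covered (V : finType) (k : nat) (F : {set k.-tuple V}) : {set V} :=
  [set v | [exists e in F, v \in e]].

Definition almost_acyclic (V : finType) (k : nat) (E : {set k.-tuple V}) : Prop :=
  forall F : {set k.-tuple V}, F \subset E ->
    Rle (Rmult (INR #|F|) (Rminus (INR k) (Rdiv (INR 11) (INR 10)))) (INR #|covered F|).

Definition hweight (V : finType) (N : nat) (y : {ffun V -> 'Z_N}) : nat :=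
  #|[set v | y v != 0%R]|.

Definition supp (V : finType) (N : nat) (y : {ffun V -> 'Z_N}) : {set V} :=
  [set v | y v != 0%R].

Definition edges_of (V : finType) (k : nat) (E' : {set k.-tuple V}) :=
  {e : k.-tuple V | e \in E'}.

Definition is_B (V : finType) (k N : nat) (E' : {set k.-tuple V})
    (B : {ffun edges_of E' -> {ffun V -> 'Z_N}}) : bool :=
  [forall e : edges_of E',
     (supp (B e) \subset [set v | v \in val e]) && (3 <= #|supp (B e)|)].

Definition SigmaB (V : finType) (k N : nat) (E' : {set k.-tuple V})
    (B : {ffun edges_of E' -> {ffun V -> 'Z_N}}) : {ffun V -> 'Z_N} :=
  (\sum_(e : edges_of E') B e)%R.

Definition B_l (V : finType) (k N l : nat) (E' : {set k.-tuple V})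
    : {set {ffun edges_of E' -> {ffun V -> 'Z_N}}} :=
  [set B | is_B B && (hweight (SigmaB B) == l)].

Local Open Scope R_scope.
Definition B_bound (d N k m l : nat) : R :=
  Rpower ((15 * INR d * INR N ^ k) ^ 4 * INR m / INR l) (INR l / 2).
Close Scope R_scope.

(* Main.v *)
Require Import Defs.
From Stdlib Require Import Reals Lra Lia.
From mathcomp Require Import all_boot all_algebra.
From mathcomp Require Import zify.
From mathcomp Require Import Rstruct.
Set Implicit Arguments. Unset Strict Implicit. Unset Printing Implicit Defensive.
Import mathcomp.order.order.Order.TTheory GRing.Theory Num.Theory.

Section Conn.
Variables (T : finType) (inc : rel T).
Implicit Types (A C : {set T}) (x r f a b g : T).
Definition crel (A : {set T}) : rel T := fun a b => [&& a \in A, b \in A & inc a b].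
Definition comp (A : {set T}) x := [set g | connect (crel A) x g].
Definition conn (A : {set T}) x := (x \in A) && (A \subset comp A x).

Lemma connect_inv (e : rel T) (P : pred T) x y :
  P x -> (forall a b, P a -> e a b -> P b) -> connect e x y -> P y.
Proof.
move=> Px step /connectP [p pth ->]; elim: p x Px pth => //= b p IH a Pa /andP[eab pth].
exact: IH (step _ _ Pa eab) pth.
Qed.

Lemma comp_sub A x : x \in A -> comp A x \subset A.
Proof.
move=> xA; apply/subsetP => g; rewrite inE.
apply: (connect_inv (P := mem A)) => // a b _ /and3P[].
by [].
Qed.

Lemma comp_closed A x a b : a \in comp A x -> b \in A -> a \in A -> inc a b ->
  b \in comp A x.
Proof.
rewrite !inE => xa bA aA iab; apply: connect_trans xa (connect1 _).
by rewrite /crel aA bA iab.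
Qed.

Lemma comp_conn A x : x \in A -> conn (comp A x) x.
Proof.
move=> xA; rewrite /conn inE connect0 /=; apply/subsetP => g.
rewrite inE => cg; rewrite inE.
pose P := fun h => (h \in comp A x) && connect (crel (comp A x)) x h.
have : P g.
  apply: (connect_inv (P := P) _ _ cg).
    by rewrite /P inE !connect0.
  move=> a b /andP[ca cca] /and3P[aA bA iab].
  have cb : b \in comp A x by apply: comp_closed ca bA aA iab.
  rewrite /P cb /=; apply: connect_trans cca (connect1 _).
  by rewrite /crel ca cb iab.
by case/andP.
Qed.

Lemma conn_split C r f : conn C r -> f \in C -> f != r ->
  let C1 := comp (C :\ r) f in
  [/\ conn C1 f, C1 \subset C :\ r & conn (C :\: C1) r].
Proof.
move=> /andP[rC Csub] fC fr C1.
have fC' : f \in C :\ r by rewrite !inE fr fC.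
have s1 : C1 \subset C :\ r by apply: comp_sub.
have rn1 : r \notin C1.
  by apply/negP => /(subsetP s1); rewrite !inE eqxx.
split => //; first exact: comp_conn.
rewrite /conn in_setD rn1 rC /=; apply/subsetP => g.
rewrite in_setD => /andP[gn1 gC].
pose P := fun h => (h \in C1) || connect (crel (C :\: C1)) r h.
have : P g.
  have := subsetP Csub g gC; rewrite inE => cg.
  apply: (connect_inv (P := P) _ _ cg); first by rewrite /P connect0 orbT.
  move=> a b Pa /and3P[aC bC iab].
  rewrite /P; case b1: (b \in C1) => //=.
  case a1: (a \in C1).
    case: (eqVneq b r) => [->|br]; first exact: connect0.
    have : b \in C1.
      apply: (comp_closed (a := a)) iab => //; first by rewrite !inE br bC.
      exact: (subsetP s1 a a1).
    by rewrite b1.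
  move: Pa; rewrite /P a1 /= => ca; apply: connect_trans ca (connect1 _).
  by rewrite /crel !in_setD a1 b1 aC bC iab.
by rewrite /P (negbTE gn1) /= inE.
Qed.
End Conn.
Section SumInj.
Variable R : numDomainType.
Local Open Scope ring_scope.
Lemma sum_inj_le (I J : finType) (P : pred I) (Q : pred J) (h : I -> J) (F : J -> R) :
  {in P &, injective h} -> (forall i, P i -> Q (h i)) -> (forall j, Q j -> 0 <= F j) ->
  \sum_(i | P i) F (h i) <= \sum_(j | Q j) F j.
Proof.
move=> hinj hQ F0.
set S := h @: [set i | P i].
have -> : \sum_(i | P i) F (h i) = \sum_(j | Q j && (j \in S)) F j.
  transitivity (\sum_(j in S) F j).
    rewrite big_imset /=; last by move=> x y; rewrite !inE; exact: hinj.
    by apply: eq_bigl => i; rewrite inE.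
  apply: eq_bigl => j; case jS: (j \in S); rewrite ?andbF ?andbT //.
  by case/imsetP: jS => i; rewrite inE => /hQ Pi ->.
rewrite [X in _ <= X](bigID (fun j => j \in S)) /=.
by rewrite lerDl; apply: sumr_ge0 => j /andP[/F0].
Qed.
End SumInj.
Lemma setDU_sub (T : finType) (A B : {set T}) : B \subset A -> A :\: B :|: B = A.
Proof.
move=> sBA; apply/setP => x; rewrite !inE.
case: (boolP (x \in B)) => xB /=.
  by rewrite ?orbT (subsetP sBA x xB).
by rewrite ?orbF.
Qed.

Section Wsec.
Variables (T : finType) (inc : rel T) (R : realFieldType) (y : R).
Local Open Scope ring_scope.
Implicit Types (U C : {set T}) (r f : T).
Definition Wsum U r := \sum_(C : {set T} | (C \subset U) && conn inc C r) y ^+ #|C|.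
Definition nb U r := [set f in U | (f != r) && inc r f].

Hypothesis y0 : 0 <= y.

Lemma Wsum_ge0 U r : 0 <= Wsum U r.
Proof. by apply: sumr_ge0 => C _; apply: exprn_ge0. Qed.

Lemma W_step U r f : f \in U -> f != r ->
  Wsum U r <= Wsum (U :\ f) r * (1 + Wsum (U :\ r) f).
Proof.
move=> fU fr.
rewrite mulrDr mulr1 /Wsum (bigID (fun C => f \in C)) /= addrC.
apply: lerD.
  rewrite le_eqVlt; apply/orP; left; apply/eqP; apply: eq_bigl => C.
  by rewrite subsetD1 andbAC.
rewrite big_distrlr /= pair_big_dep /=.
pose h := fun C : {set T} => (C :\: comp inc (C :\ r) f, comp inc (C :\ r) f).
rewrite (eq_bigr (fun C => y ^+ #|(h C).1| * y ^+ #|(h C).2|)); last first.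
  move=> C /andP[/andP[_ cC] fC].
  have [_ s1 _] := conn_split cC fC fr.
  rewrite /h /= -exprD addnC -(cardsID (comp inc (C :\ r) f) C).
  rewrite (setIidPr _) //; apply: subset_trans s1 _; exact: subsetDl.
apply: (sum_inj_le (h := h) (F := fun p => y ^+ #|p.1| * y ^+ #|p.2|)).
- move=> C C' /andP[/andP[_ cC] fC] /andP[/andP[_ cC'] fC'] [e1 e2].
  have [_ s1 _] := conn_split cC fC fr.
  have [_ s1' _] := conn_split cC' fC' fr.
  have s2 : comp inc (C :\ r) f \subset C by apply: subset_trans s1 (subsetDl _ _).
  have s2' : comp inc (C' :\ r) f \subset C' by apply: subset_trans s1' (subsetDl _ _).
  by rewrite -(setDU_sub s2) -(setDU_sub s2') e1 e2.
- move=> C /andP[/andP[CU cC] fC].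
  have [c1 s1 c2] := conn_split cC fC fr.
  rewrite /h /= c1 c2 !andbT subsetD1 (subset_trans (subsetDl _ _) CU) /=.
  have fc1 : f \in comp inc (C :\ r) f by case/andP: c1.
  rewrite in_setD fc1 /=.
  apply: subset_trans s1 _; exact: setSD.
- by move=> p _; rewrite mulr_ge0 ?exprn_ge0.
Qed.

Variables (E : {set T}) (d : nat) (a : R).
Hypotheses (a0 : 0 <= a) (ya : y * (1 + a) ^+ d <= a)
  (degE : forall e, e \in E -> (#|nb E e| <= d)%N).

Lemma W_base U r : r \in U -> nb U r = set0 -> Wsum U r = y.
Proof.
move=> rU nb0; rewrite /Wsum (big_pred1 [set r]) ?cards1 ?expr1 //.
move=> C /=; apply/idP/idP.
  case/andP=> CU /andP[rC Cs]; apply/eqP/setP => g; rewrite inE.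
  apply/idP/idP; last by move/eqP->.
  move=> gC; have := subsetP Cs g gC; rewrite inE.
  apply: (connect_inv (P := pred1 r)) => //= a' b /eqP -> /and3P[_ bC irb].
  apply/negPn/negP => br.
  have : b \in nb U r by rewrite inE (subsetP CU b bC) br irb.
  by rewrite nb0 inE.
move/eqP->; rewrite sub1set rU /conn set11 /=; apply/subsetP => g.
by rewrite !inE => /eqP ->; exact: connect0.
Qed.

Lemma W_bound n U r : (#|U| <= n)%N -> U \subset E -> r \in U ->
  Wsum U r <= y * (1 + a) ^+ #|nb U r|.
Proof.
elim: n U r => [|n IH] U r.
  by rewrite leqn0 => /eqP/cards0_eq -> _; rewrite inE.
move=> cU UE rU.
case: (set_0Vmem (nb U r)) => [nb0|[f fnb]].
  by rewrite W_base // nb0 cards0 expr0 mulr1.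
move: (fnb); rewrite inE => /and3P[fU fr irf].
apply: le_trans (W_step fU fr) _.
have cUf : (#|U :\ f| <= n)%N by move: cU; rewrite (cardsD1 f U) fU.
have cUr : (#|U :\ r| <= n)%N by move: cU; rewrite (cardsD1 r U) rU.
have rUf : r \in U :\ f by rewrite !inE eq_sym fr rU.
have fUr : f \in U :\ r by rewrite !inE fr fU.
have h1 := IH (U :\ f) r cUf (subset_trans (subsetDl _ _) UE) rUf.
have nbf : nb (U :\ f) r = nb U r :\ f.
  by apply/setP => g; rewrite !inE; case: (g == f); rewrite ?andbF.
have cnb : #|nb U r| = #|nb (U :\ f) r|.+1 by rewrite nbf (cardsD1 f (nb U r)) fnb.
have h2 := IH (U :\ r) f cUr (subset_trans (subsetDl _ _) UE) fUr.
have h3 : Wsum (U :\ r) f <= a.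
  apply: le_trans h2 _; apply: le_trans ya.
  have hd : (#|nb (U :\ r) f| <= d)%N.
    apply: leq_trans (degE (subsetP UE f fU)); apply: subset_leq_card.
  apply/subsetP => g; rewrite !inE => /and3P[/andP[_ gU] -> ->].
  by rewrite (subsetP UE g gU).
  apply: ler_wpM2l y0 _ _ _; apply: ler_weXn2l hd; by rewrite lerDl.
rewrite cnb exprS mulrA [y * _]mulrC -mulrA mulrC.
apply: ler_pM; rewrite ?Wsum_ge0 ?addr_ge0 ?ler01 ?Wsum_ge0 ?lerD2l //.
Qed.
End Wsec.
Lemma cardE' (X : finType) (P : pred X) : #|[set x | P x]| = \sum_x (P x : nat).
Proof.
rewrite -sum1_card big_mkcond /=; apply: eq_bigr => x _; rewrite inE; by case: (P x).
Qed.

Section Hyp.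
Variables (V : finType) (k N : nat).
Local Notation T := (k.-tuple V).
Local Notation Vec := {ffun V -> 'Z_N}.
Implicit Types (A C F : {set T}) (B : {ffun T -> Vec}).
Definition inc : rel T := fun e f => incident e f.
Definition Bset (A : {set T}) : {set {ffun T -> Vec}} :=
  [set B : {ffun T -> Vec} | [forall e : T, if e \in A then (supp (B e) \subset [set v | v \in e]) && (3 <= #|supp (B e)|)
                      else B e == 0%R]].
Definition SumB (A : {set T}) (B : {ffun T -> Vec}) : Vec := (\sum_(e in A) B e)%R.

Lemma BsetP A B e : B \in Bset A -> if e \in A then
   (supp (B e) \subset [set v | v \in e]) && (3 <= #|supp (B e)|) else B e == 0%R.
Proof. by rewrite inE => /forallP/(_ e). Qed.

Lemma sum_supp A (B : {ffun T -> Vec}) v : SumB A B v != 0%R -> exists2 e, e \in A & B e v != 0%R.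
Proof.
move=> H; case: (boolP [exists e, (e \in A) && (B e v != 0%R)]) => [/existsP[e /andP[]] | /existsPn h].
  by exists e.
exfalso; move: H; rewrite /SumB sum_ffunE big1 ?eqxx // => e eA.
by move: (h e); rewrite eA /= => /negbNE/eqP.
Qed.

Lemma supp_in A B e v : B \in Bset A -> B e v != 0%R -> v \in e.
Proof.
move=> /(BsetP e); case: (e \in A).
  by case/andP => /subsetP s _ h; have := s v; rewrite !inE; apply.
by move=> /eqP -> ; rewrite ffunE eqxx.
Qed.

Variables (E : {set T}).
Hypotheses (uniqE : forall e, e \in E -> uniq e) (acyc : almost_acyclic E).

Lemma acyc_nat F : F \subset E -> (10 * k * #|F| <= 10 * #|covered F| + 11 * #|F|)%N.
Proof.
move=> FE; have H := acyc FE.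
apply/ssrnat.leP; apply: INR_le; rewrite !plus_INR !mult_INR.
have h10 : INR 10 = IZR 10 by simpl; lra.
have h11 : INR 11 = IZR 11 by simpl; lra.
rewrite h10 h11 in H *.
set c := INR #|F| in H *; set kk := INR k in H *; set cv := INR #|covered F| in H *.
have e1 : Rmult (Rmult (IZR 10) kk) c = Rplus (Rmult (IZR 10) (Rmult c (Rminus kk (Rdiv (IZR 11) (IZR 10))))) (Rmult (IZR 11) c) by lra.
rewrite e1; replace (INR 0) with (IZR 0) by reflexivity; lra.
Qed.

Definition degv C (v : V) := (\sum_(e in C) (v \in e : nat))%N.

Lemma cardI_sum (X : finType) (P Q : {set X}) : #|P :&: Q| = (\sum_x ((x \in P) && (x \in Q)) : nat)%N.
Proof. by rewrite -cardE'; congr #|_|; apply/setP => x; rewrite !inE. Qed.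

Lemma deg2 C v e0 e : e0 \in C -> e \in C -> e != e0 -> v \in e0 -> v \in e -> (2 <= degv C v)%N.
Proof.
move=> e0C eC ne ve0 ve; rewrite /degv (bigD1 e0) //= (bigD1 e) /=; last by rewrite eC ne.
by rewrite ve0 ve.
Qed.

Lemma deg_le C v : (degv C v <= #|C|)%N.
Proof. rewrite /degv -sum1_card; apply: leq_sum => e _; by case: (v \in e). Qed.

Lemma weight_lb C B : C \subset E -> B \in Bset C ->
  (4 * #|C| <= 5 * hweight (SumB C B))%N /\ (0 < #|C| -> 2 <= hweight (SumB C B))%N.
Proof.
move=> CE BC.
set w := hweight (SumB C B).
set D := [set v | 2 <= degv C v].
set P1 := [set v | degv C v == 1].
set s := (\sum_(e in C) #|[set v | v \in e] :&: D|)%N.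
set t := (\sum_v (degv C v).-1)%N.
have degk : (\sum_v degv C v = k * #|C|)%N.
  rewrite /degv exchange_big /= mulnC -sum_nat_const; apply: eq_bigr => e eC.
  rewrite -cardE' cardsE; have /card_uniqP -> := uniqE (subsetP CE e eC).
  exact: size_tuple.
have cov : #|covered C| = (\sum_v (0 < degv C v) : nat)%N.
  rewrite /covered cardE'; apply: eq_bigr => v _; congr nat_of_bool.
  apply/idP/idP.
    case/exists_inP => e eC ve; rewrite /degv (bigD1 e) //= ve; by [].
  rewrite lt0n; apply: contraR => /exists_inPn h; rewrite sum_nat_eq0.
  by apply/forall_inP => e eC; have := h e eC; case: (v \in e).
have tcov : (\sum_v degv C v = t + #|covered C|)%N.
  rewrite cov /t -big_split /=; apply: eq_bigr => v _; by case: (degv C v) => // n; rewrite addn1.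
have sD : (s <= 2 * t)%N.
  rewrite /s /t big_distrr /=.
  rewrite (eq_bigr (fun e => \sum_v ((v \in e) && (v \in D)) : nat)%N); last first.
    by move=> e _; rewrite cardI_sum; apply: eq_bigr => v _; rewrite inE.
  rewrite exchange_big /=; apply: leq_sum => v _.
  case vD: (v \in D).
    rewrite (eq_bigr (fun e => (v \in e) : nat)); last by move=> e _; rewrite andbT.
    move: vD; rewrite inE => h; change (degv C v <= 2 * (degv C v).-1)%N; lia.
  by rewrite big1 // => e _; rewrite andbF.
have supw : (\sum_(e in C) #|supp (B e) :&: P1| <= w)%N.
  rewrite (eq_bigr (fun e => \sum_v ((v \in supp (B e)) && (v \in P1)) : nat)%N); last first.
    by move=> e _; rewrite cardI_sum.
  rewrite exchange_big /= /w /hweight cardE'; apply: leq_sum => v _.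
  case vP: (v \in P1); last by rewrite big1 // => e _; rewrite andbF.
  have dv1 : degv C v = 1%N by move: vP; rewrite inE => /eqP.
  case: (boolP [exists e in C, B e v != 0%R]) => [/exists_inP[e0 e0C B0v] | /exists_inPn h].
    have -> : SumB C B v = B e0 v.
      rewrite /SumB sum_ffunE (bigD1 e0) //= big1 ?addr0 // => e /andP[eC ne].
      apply/eqP; apply/negP => /negP Bev.
      have := deg2 e0C eC ne (supp_in BC B0v) (supp_in BC Bev); by rewrite dv1.
    rewrite B0v; apply: (@leq_trans (degv C v)); last by rewrite dv1.
    apply: leq_sum => e eC; rewrite ?vP ?andbT inE.
    case Bev: (B e v != 0%R) => //=; by rewrite (supp_in BC Bev).
  by rewrite big1 // => e eC; rewrite inE (negbTE (h e eC)).
have sup : (3 * #|C| <= w + s)%N.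
  apply: leq_trans _ (leq_add supw (leqnn s)); rewrite /s -big_split /= mulnC -sum_nat_const.
  apply: leq_sum => e eC.
  have := BsetP e BC; rewrite eC => /andP[/subsetP Ssub S3].
  apply: leq_trans S3 _.
  apply: leq_trans (_ : #|(supp (B e) :&: P1) :|: ([set v | v \in e] :&: D)| <= _)%N.
    apply: subset_leq_card; apply/subsetP => v vS.
    have ve : v \in e by have := Ssub v vS; rewrite inE.
    have d1 : (1 <= degv C v)%N by rewrite /degv (bigD1 e) //= ve.
    rewrite in_setU !in_setI vS /= !inE ve /=; case: (degv C v) d1 => [|[|n]] //.
  by rewrite cardsU leq_subr.
have small : (#|C| <= 1 -> s = 0)%N.
  move=> c1; rewrite /s big1 // => e eC; apply/eqP; rewrite cards_eq0; apply/eqP/setP => v.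
  rewrite !inE; have := deg_le C v; case: (leqP 2 (degv C v)) => h //; [lia | by rewrite andbF].
have ac := acyc_nat CE.
rewrite -/w in sup *.
split; first nia.
move=> c0; case: (leqP #|C| 1) => c1; first by have := small c1; lia.
nia.
Qed.
Lemma hweight_add (x y : Vec) : (forall v, x v != 0%R -> y v = 0%R) ->
  hweight (x + y)%R = (hweight x + hweight y)%N.
Proof.
move=> h; rewrite /hweight !cardE' -big_split /=; apply: eq_bigr => v _; rewrite ffunE.
case: (boolP (x v != 0%R)) => [xv|/negPn/eqP ->].
  by rewrite (h v xv) addr0 xv.
by rewrite add0r.
Qed.

Definition restr A B : {ffun T -> Vec} := [ffun e => if e \in A then B e else 0%R].

Lemma restr_Bset A A' B : A \subset A' -> B \in Bset A' -> restr A B \in Bset A.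
Proof.
move=> sA BA; rewrite inE; apply/forallP => e; rewrite ffunE.
case eA: (e \in A); last by rewrite eqxx.
by have := BsetP e BA; rewrite (subsetP sA e eA).
Qed.

Lemma SumB_restr A B : SumB A (restr A B) = SumB A B.
Proof. by apply: eq_bigr => e eA; rewrite ffunE eA. Qed.

Lemma restr_split C A B : C \subset A -> B \in Bset A ->
  B = [ffun e => (restr C B e + restr (A :\: C) B e)%R].
Proof.
move=> CA BA; apply/ffunP => e; rewrite !ffunE in_setD.
case eC: (e \in C); first by rewrite (subsetP CA e eC) /= addr0.
case eA: (e \in A) => /=; first by rewrite add0r.
by rewrite addr0; have := BsetP e BA; rewrite eA => /eqP.
Qed.

Lemma card_Bset C : (1 < N)%N -> (#|Bset C| <= (N ^ k) ^ #|C|)%N.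
Proof.
move=> N2.
pose g (B : {ffun T -> Vec}) : {ffun T -> {ffun 'I_k -> 'Z_N}} :=
  [ffun e => [ffun i => B e (tnth e i)]].
have ginj : {in Bset C &, injective g}.
  move=> B B' BC B'C /ffunP h; apply/ffunP => e; apply/ffunP => v.
  have he := h e; rewrite !ffunE in he.
  case: (boolP (v \in e)) => [/tnthP[i ->]|ve].
    by move/ffunP: he => /(_ i); rewrite !ffunE.
  have z1 : B e v = 0%R by apply/eqP; apply: contraNT ve => /(supp_in BC).
  have z2 : B' e v = 0%R by apply/eqP; apply: contraNT ve => /(supp_in B'C).
  by rewrite z1 z2.
rewrite -(card_in_imset ginj).
have -> : (N ^ k)%N = #|[set: {ffun 'I_k -> 'Z_N}]|.
  by rewrite cardsT card_ffun card_ord card_ord Zp_cast.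
rewrite -(card_pffun_on (0%R : {ffun 'I_k -> 'Z_N}) (mem C)); apply: subset_leq_card; apply/subsetP => _ /imsetP[B BC ->].
apply/pffun_onP; split; last by move=> x _; rewrite inE.
apply/subsetP => e; rewrite inE; apply: contraNT => eC.
have := BsetP e BC; rewrite (negbTE eC) => /eqP Be0.
by apply/eqP/ffunP => i; rewrite !ffunE Be0 ffunE.
Qed.
Section PhiSec.
Variables (R : realFieldType) (u z a : R) (d : nat).
Local Open Scope ring_scope.
Hypotheses (u0 : 0 <= u) (u1 : u <= 1) (z0 : 0 <= z) (z1 : z <= 1) (a0 : 0 <= a)
  (N2 : (1 < N)%N)
  (ya : (N ^ k)%:R * z * (1 + a) ^+ d <= a)
  (degE : forall e, e \in E -> (#|nb inc E e| <= d)%N).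

Definition G (p : {set T} * {ffun T -> Vec}) : R :=
  u ^+ hweight (SumB p.1 p.2) * z ^+ #|p.1|.
Definition Phi (U : {set T}) := \sum_(p : {set T} * {ffun T -> Vec} | (p.1 \subset U) && (p.2 \in Bset p.1)) G p.

Lemma G_ge0 p : 0 <= G p.
Proof. by rewrite mulr_ge0 ?exprn_ge0. Qed.

Lemma Phi_ge0 (U : {set T}) : 0 <= Phi U.
Proof. by apply: sumr_ge0 => p _; exact: G_ge0. Qed.

Let y := (N ^ k)%:R * z.
Lemma y0 : 0 <= y.
Proof. by rewrite mulr_ge0 ?ler0n. Qed.

Lemma inner_bound (U : {set T}) (r : T) : U \subset E ->
  \sum_(q : {set T} * {ffun T -> Vec} | ((q.1 \subset U) && conn inc q.1 r) && (q.2 \in Bset q.1)) G q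
   <= u ^+ 2 * Wsum inc y U r.
Proof.
move=> UE.
have -> : \sum_(q : {set T} * {ffun T -> Vec} | ((q.1 \subset U) && conn inc q.1 r) && (q.2 \in Bset q.1)) G q
   = \sum_(C : {set T} | (C \subset U) && conn inc C r) \sum_(B | B \in Bset C) G (C, B).
  by rewrite pair_big_dep; apply: eq_bigr => -[].
rewrite /Wsum mulr_sumr.
apply: ler_sum => C /andP[CU cC].
have CE : C \subset E by apply: subset_trans CU UE.
have c0 : (0 < #|C|)%N by apply/card_gt0P; exists r; case/andP: cC.
apply: le_trans (_ : \sum_(B in Bset C) (u ^+ 2 * z ^+ #|C|) <= _).
  apply: ler_sum => B BC; rewrite /G /=; apply: ler_wpM2r; first exact: exprn_ge0.
  apply: ler_wiXn2l => //; have [_ h] := weight_lb CE BC; exact: h c0.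
rewrite sumr_const -mulr_natr /y exprMn -natrX.
rewrite [X in _ <= X](_ : _ = u ^+ 2 * z ^+ #|C| * ((N ^ k) ^ #|C|)%:R); last first.
  by rewrite -mulrA [z ^+ _ * _]mulrC.
apply: ler_wpM2l; first by rewrite mulr_ge0 ?exprn_ge0.
by rewrite ler_nat card_Bset.
Qed.
Lemma Phi_step (U : {set T}) (r : T) : U \subset E -> r \in U ->
  Phi U <= Phi (U :\ r) * (1 + u ^+ 2 * Wsum inc y U r).
Proof.
move=> UE rU.
rewrite mulrDr mulr1 /Phi (bigID (fun p : {set T} * {ffun T -> Vec} => r \in p.1)) /= addrC.
apply: lerD.
  by rewrite le_eqVlt; apply/orP; left; apply/eqP; apply: eq_bigl => p; rewrite subsetD1 andbAC.
rewrite mulrC; apply: le_trans (ler_wpM2r (Phi_ge0 (U :\ r)) (inner_bound r UE)).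
rewrite /Phi big_distrlr pair_big_dep /=.
pose h (p : {set T} * {ffun T -> Vec}) :=
  ((comp inc p.1 r, restr (comp inc p.1 r) p.2),
   (p.1 :\: comp inc p.1 r, restr (p.1 :\: comp inc p.1 r) p.2)).
rewrite (eq_bigr (fun p => G (h p).1 * G (h p).2)); last first.
  move=> [A B] /= /andP[/andP[AU BA] rA].
  set C := comp inc A r.
  have CA : C \subset A by apply: comp_sub.
  rewrite /G /= !SumB_restr.
  have sumE : SumB A B = (SumB C B + SumB (A :\: C) B)%R.
    rewrite /SumB (bigID (fun e => e \in C)) /=; congr (_ + _).
      apply: eq_bigl => e; case eC: (e \in C); rewrite ?andbT ?andbF //.
      by rewrite (subsetP CA e eC).
    by apply: eq_bigl => e; rewrite in_setD andbC.
  rewrite sumE hweight_add; last first.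
    move=> v /sum_supp[e eC Bev]; apply/eqP; apply/negP => /negP /sum_supp[e' e'D Be'v].
    move: e'D; rewrite in_setD => /andP[/negP e'C e'A]; apply: e'C.
    apply: (comp_closed eC e'A (subsetP CA e eC)).
    by apply/hasP; exists v; [exact: (supp_in BA Bev) | exact: (supp_in BA Be'v)].
  rewrite -(cardsID C A) (setIidPr CA) !exprD.
  by rewrite mulrACA.
apply: (sum_inj_le (h := h) (F := fun q => G q.1 * G q.2)).
- move=> [A B] [A' B'] /= /andP[/andP[AU BA] rA] /andP[/andP[A'U B'A'] rA'] /= [e1 e2 e3 e4].
  have CA : comp inc A r \subset A := comp_sub inc rA.
  have CA' : comp inc A' r \subset A' := comp_sub inc rA'.
  have eA : A = A' by rewrite -(setDU_sub CA) -(setDU_sub CA') e3 e1.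
  have BA1 : B \in Bset A := BA.
  have BA2 : B' \in Bset A' := B'A'.
  by rewrite (restr_split CA BA1) (restr_split CA' BA2) e2 e4 eA.
- move=> [A B] /= /andP[/andP[AU BA] rA].
  have CA : comp inc A r \subset A := comp_sub inc rA.
  rewrite (restr_Bset CA BA) (restr_Bset (subsetDl A _) BA) comp_conn //.
  rewrite (subset_trans CA AU) subsetD1 (subset_trans (subsetDl _ _) AU).
  by rewrite in_setD inE connect0.
- by move=> q _; rewrite mulr_ge0 ?G_ge0.
Qed.
Lemma Phi0 : Phi set0 = 1.
Proof.
rewrite /Phi (big_pred1 ((set0 : {set T}), (0%R : {ffun T -> Vec}))) /=.
  rewrite /G /SumB /= big_set0 cards0 expr0 mulr1.
  suff -> : hweight (0%R : Vec) = 0%N by rewrite expr0.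
  by rewrite /hweight cardE' big1 // => v _; rewrite ffunE eqxx.
move=> [A B] /=; apply/idP/idP.
  case/andP; rewrite subset0 => /eqP -> BA; apply/eqP; congr (_, _); apply/ffunP => e.
  by have := BsetP e BA; rewrite inE ffunE => /eqP.
move/eqP => [-> ->]; rewrite sub0set /= inE; apply/forallP => e; by rewrite inE ffunE eqxx.
Qed.

Lemma W_le_a (U : {set T}) r : U \subset E -> r \in U -> Wsum inc y U r <= a.
Proof.
move=> UE rU; have yd : y * (1 + a) ^+ d <= a by [].
apply: le_trans (W_bound y0 a0 yd degE (leqnn _) UE rU) _.
apply: le_trans yd; apply: ler_wpM2l y0 _ _ _; apply: ler_weXn2l; first by rewrite lerDl.
apply: leq_trans (degE (subsetP UE r rU)); apply: subset_leq_card.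
apply/subsetP => g; rewrite !inE => /and3P[gU -> ->]; by rewrite (subsetP UE g gU).
Qed.

Lemma Phi_bound n (U : {set T}) : (#|U| <= n)%N -> U \subset E ->
  Phi U <= (1 + u ^+ 2 * a) ^+ #|U|.
Proof.
elim: n U => [|n IH] U.
  by rewrite leqn0 => /eqP/cards0_eq -> _; rewrite Phi0 cards0 expr0.
move=> cU UE; case: (set_0Vmem U) => [->|[r rU]]; first by rewrite Phi0 cards0 expr0.
apply: le_trans (Phi_step UE rU) _.
have cUr : (#|U :\ r| <= n)%N by move: cU; rewrite (cardsD1 r U) rU.
rewrite (cardsD1 r U) rU add1n [(1 + u ^+ 2 * a) ^+ _]exprSr.
have W0 := Wsum_ge0 inc y0 U r.
apply: ler_pM; rewrite ?Phi_ge0 ?addr_ge0 ?mulr_ge0 ?exprn_ge0 //.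
  exact: IH cUr (subset_trans (subsetDl _ _) UE).
rewrite lerD2l; apply: ler_wpM2l; first exact: exprn_ge0.
exact: W_le_a.
Qed.

Lemma core l :
  u ^+ l * z ^+ (2 * l) * ((\sum_(E' : {set T} | E' \subset E) #|B_l N l E'|)%N)%:R
  <= (1 + u ^+ 2 * a) ^+ #|E|.
Proof.
pose X (E' : {set T}) := [set B in Bset E' | hweight (SumB E' B) == l].
have step1 : (\sum_(E' : {set T} | E' \subset E) #|B_l N l E'| <=
              \sum_(E' : {set T} | E' \subset E) #|X E'|)%N.
  apply: leq_sum => E' _.
  pose ext (B : {ffun edges_of E' -> Vec}) : {ffun T -> Vec} :=
    [ffun e => if (insub e : option (edges_of E')) is Some e' then B e' else 0%R].
  have inj : injective ext.
    by move=> B B' /ffunP h; apply/ffunP => x; have := h (val x); rewrite !ffunE valK.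
  rewrite -(card_imset _ inj); apply: subset_leq_card; apply/subsetP => _ /imsetP[B BB ->].
  move: BB; rewrite inE => /andP[isB hw]; rewrite inE; apply/andP; split.
    rewrite inE; apply/forallP => e; rewrite ffunE.
    case: insubP => [x ex vx|ne]; last by rewrite (negbTE ne) eqxx.
    by rewrite ex; have := forallP isB x; rewrite vx.
  suff -> : SumB E' (ext B) = SigmaB B by [].
  by rewrite /SumB big_sub /SigmaB; apply: eq_bigr => x _; rewrite ffunE valK.
apply: le_trans (_ : u ^+ l * z ^+ (2 * l) * ((\sum_(E' : {set T} | E' \subset E) #|X E'|)%N)%:R <= _).
  by apply: ler_wpM2l; [rewrite mulr_ge0 ?exprn_ge0 | rewrite ler_nat].
rewrite natr_sum (eq_bigr (fun E' => \sum_(B in X E') 1)); last by move=> E' _; rewrite sumr_const.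
rewrite pair_big_dep mulr_sumr /=.
apply: le_trans (Phi_bound (leqnn _) (subxx E)).
apply: le_trans (_ : \sum_(p : {set T} * {ffun T -> Vec} | (p.1 \subset E) && (p.2 \in X p.1)) G p <= _).
  apply: ler_sum => -[A B] /= /andP[AE]; rewrite inE => /andP[BA /eqP hw].
  rewrite mulr1 /G /= hw; apply: ler_wpM2l; first exact: exprn_ge0.
  apply: ler_wiXn2l => //.
  have [h _] := weight_lb AE BA.
  rewrite hw in h.
  rewrite -(@leq_pmul2l 4) //; apply: leq_trans h _; lia.
apply: (sum_inj_le (h := id) (F := G)).
- by move=> ? ? _ _.
- by move=> -[A B] /= /andP[AE]; rewrite inE => /andP[BA _]; rewrite AE BA.
- by move=> p _; exact: G_ge0.
Qed.
End PhiSec.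
End Hyp.

Section FinalReal.
Local Open Scope R_scope.

Lemma exp_le' x y : x <= y -> exp x <= exp y.
Proof.
intros H; destruct (Rle_lt_or_eq_dec _ _ H) as [h|h].
- left; now apply exp_increasing.
- rewrite h; lra.
Qed.

Lemma exp_INR_mul (n : nat) (x : R) : exp (INR n * x) = exp x ^ n.
Proof.
induction n as [|n IH].
- simpl; rewrite Rmult_0_l exp_0; reflexivity.
- rewrite S_INR Rmult_plus_distr_r Rmult_1_l exp_plus IH; simpl; ring.
Qed.

Lemma one_plus_pow (x : R) (n : nat) : 0 <= x -> (1 + x) ^ n <= exp (INR n * x).
Proof.
intros hx; rewrite exp_INR_mul; apply pow_incr; split; [lra | apply exp_ineq1_le].
Qed.

Lemma pow_d_le3 (d : nat) : (1 <= d)%nat -> (1 + / INR d) ^ d <= 3.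
Proof.
intros hd; have hd' : 0 < INR d by apply lt_0_INR; lia.
eapply Rle_trans; [apply one_plus_pow; left; now apply Rinv_0_lt_compat|].
rewrite Rinv_r; [apply exp_le_3 | lra].
Qed.

Lemma final_real (S m l d Nk : nat) :
  (1 <= d)%nat -> (1 <= l)%nat -> (l <= m)%nat -> (1 <= Nk)%nat ->
  let X := INR d * INR Nk in
  let s := sqrt (INR m / INR l) in
  (/ s) ^ l * (/ (3 * X)) ^ (2 * l) * INR S <= (1 + (/ s) ^ 2 * / INR d) ^ m ->
  INR S <= Rpower ((15 * INR d * INR Nk) ^ 4 * INR m / INR l) (INR l / 2).
Proof.
intros hd hl hlm hN X s H.
have hd' : 1 <= INR d by apply (le_INR 1); lia.
have hN' : 1 <= INR Nk by apply (le_INR 1); lia.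
have hl' : 0 < INR l by apply lt_0_INR; lia.
have hm' : INR l <= INR m by apply le_INR; lia.
have X1 : 1 <= X by rewrite /X; nra.
have ml0 : 0 < INR m / INR l by apply Rdiv_lt_0_compat; lra.
have s0 : 0 < s by apply sqrt_lt_R0.
have s2 : s ^ 2 = INR m / INR l by rewrite /s /= Rmult_1_r sqrt_sqrt; lra.
have is2 : (/ s) ^ 2 = INR l / INR m by rewrite pow_inv s2; field; lra.
rewrite is2 in H.
have Hexp : (1 + INR l / INR m * / INR d) ^ m <= 3 ^ l.
  have id1 : 0 < / INR d <= 1.
    split; [apply Rinv_0_lt_compat; lra|].
    rewrite -Rinv_1; apply Rinv_le_contravar; lra.
  have lm0 : 0 < INR l / INR m by apply Rdiv_lt_0_compat; lra.
  eapply Rle_trans; [apply one_plus_pow; apply Rmult_le_pos; lra|].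
  apply Rle_trans with (exp (INR l)).
    2: rewrite -(Rmult_1_r (INR l)) exp_INR_mul; apply pow_incr; split; [left; apply exp_pos| apply exp_le_3].
  apply exp_le'.
  replace (INR m * (INR l / INR m * / INR d)) with (INR l / INR d) by (field; lra).
  rewrite /Rdiv; nra.
have X3 : 0 < 3 * X by lra.
have e1 : s ^ l * (/ s) ^ l = 1 by rewrite -Rpow_mult_distr Rinv_r ?pow1; lra.
have e2 : (3 * X) ^ (2 * l) * (/ (3 * X)) ^ (2 * l) = 1 by rewrite -Rpow_mult_distr Rinv_r ?pow1; lra.
have HS : INR S <= s ^ l * (3 * X) ^ (2 * l) * 3 ^ l.
  have -> : INR S = (s ^ l * (3 * X) ^ (2 * l)) * ((/ s) ^ l * (/ (3 * X)) ^ (2 * l) * INR S).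
    have -> : (s ^ l * (3 * X) ^ (2 * l)) * ((/ s) ^ l * (/ (3 * X)) ^ (2 * l) * INR S)
      = (s ^ l * (/ s) ^ l) * ((3 * X) ^ (2 * l) * (/ (3 * X)) ^ (2 * l)) * INR S by ring.
    rewrite e1 e2; ring.
  apply Rmult_le_compat_l.
    apply Rmult_le_pos; apply pow_le; lra.
  lra.
apply (Rle_trans _ _ _ HS).
have -> : s ^ l * (3 * X) ^ (2 * l) * 3 ^ l = (s * (3 * X) ^ 2 * 3) ^ l.
  by rewrite pow_mult !Rpow_mult_distr.
apply Rle_trans with ((s * (225 * X ^ 2)) ^ l).
  apply pow_incr; split.
    apply Rmult_le_pos; [apply Rmult_le_pos; [lra | apply pow_le; lra] | lra].
  have : 0 <= X ^ 2 by apply pow_le; lra.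
  move=> hX2; simpl; nra.
have q0 : 0 < (15 * INR d * INR Nk) ^ 4 * INR m / INR l.
  apply Rdiv_lt_0_compat; [|lra]; apply Rmult_lt_0_compat; [apply pow_lt; nra | lra].
rewrite (_ : INR l / 2 = / 2 * INR l); last by field.
rewrite -Rpower_mult Rpower_sqrt // Rpower_pow; last by apply sqrt_lt_R0.
right; congr (_ ^ l).
rewrite (_ : (15 * INR d * INR Nk) ^ 4 * INR m / INR l = (225 * X ^ 2) ^ 2 * (INR m / INR l)); last first.
  by rewrite /X; field; lra.
rewrite sqrt_mult_alt; last by apply pow_le; nra.
rewrite sqrt_pow2; last by apply Rmult_le_pos; [lra | apply pow_le; lra].
rewrite /s; ring.
Qed.
End FinalReal.

Lemma natpowE n m : Nat.pow n m = (n ^ m)%N.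
Proof. elim: m => //= m IH; by rewrite IH expnS. Qed.

Theorem lemma7p11 (N k d l m : nat) (V : finType) (E : {set k.-tuple V}) :
  leq 2 N -> leq 1 d -> leq 1 l -> leq 1 m -> leq l m ->
  (forall e, e \in E -> uniq e) ->
  almost_acyclic E ->
  #|E| = m ->
  (forall e, e \in E -> leq #|[set f in E | (f != e) && incident e f]| d) ->
  Rle (INR (\sum_(E' : {set k.-tuple V} | E' \subset E) #|B_l N l E'|))
      (B_bound d N k m l).
Proof.
move=> N2 d1 l1 m1 lm uE acE cE degH.
have degE : forall e, e \in E -> (#|nb (@inc V k) E e| <= d)%N by [].
have hd' : Rle 1 (INR d) by apply (le_INR 1); lia.
have hNk : (1 <= N ^ k)%N by rewrite expn_gt0; lia.
have hN' : Rle 1 (INR (N ^ k)) by apply (le_INR 1); lia.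
have hl' : Rlt 0 (INR l) by apply lt_0_INR; lia.
have hm' : Rle (INR l) (INR m) by apply le_INR; lia.
set X := Rmult (INR d) (INR (N ^ k)).
have X1 : Rle 1 X by rewrite /X; nra.
set s := sqrt (Rdiv (INR m) (INR l)).
have ml1 : Rle 1 (Rdiv (INR m) (INR l)).
  apply (Rmult_le_reg_r (INR l)) => //; rewrite /Rdiv Rmult_assoc Rinv_l; lra.
have s1 : Rle 1 s by rewrite /s -sqrt_1; apply sqrt_le_1_alt.
have u0 : (0 <= Rinv s)%R by apply/RleP; left; apply Rinv_0_lt_compat; lra.
have u1 : (Rinv s <= 1)%R by apply/RleP; rewrite -R1E -Rinv_1; apply Rinv_le_contravar; lra.
have z0 : (0 <= Rinv (Rmult 3 X))%R by apply/RleP; left; apply Rinv_0_lt_compat; lra.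
have z1 : (Rinv (Rmult 3 X) <= 1)%R by apply/RleP; rewrite -R1E -Rinv_1; apply Rinv_le_contravar; lra.
have a0 : (0 <= Rinv (INR d))%R by apply/RleP; left; apply Rinv_0_lt_compat; lra.
have ya : ((N ^ k)%:R * Rinv (Rmult 3 X) * (1 + Rinv (INR d)) ^+ d <= Rinv (INR d))%R.
  apply/RleP; rewrite -RpowE -INRE -!RmultE -RplusE.
  have h3 := pow_d_le3 d1.
  have e : Rmult (Rmult (INR (N ^ k)) (Rinv (Rmult 3 X))) (pow (Rplus 1 (Rinv (INR d))) d)
     = Rmult (Rinv (Rmult 3 (INR d))) (pow (Rplus 1 (Rinv (INR d))) d).
    rewrite /X; field; lra.
  rewrite e; apply Rmult_le_reg_l with (Rmult 3 (INR d)); first lra.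
  rewrite -Rmult_assoc Rinv_r; last lra.
  rewrite Rmult_assoc Rinv_r; lra.
have H := core uE acE u0 u1 z0 z1 a0 N2 ya degE l.
rewrite cE in H.
move/RleP: H; rewrite -!RpowE -INRE -!RmultE -RplusE => H.
rewrite -R1E in H.
rewrite /B_bound -pow_INR natpowE.
exact: (final_real d1 l1 lm hNk H).
Qed.
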